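(* Under the standing assumptions below, for every $\theta\in\mathbb{R}^K$, $$(\theta^*-\theta)^T\bar g(\theta)=(1-\gamma)\|V_{\theta^*}-V_\theta\|_D^2+\gamma\|V_{\theta^*}-V_\theta\|_{\rm Dir}^2 .$$
   Context: Setting: finite state space $\mathcal S=[n]$, a fixed policy inducing an irreducible aperiodic transition matrix $P$ with unique stationary distribution $\pi$, bounded deterministic rewards, $r(s,s')=\sum_a\mu(s,a)r(s,a,s')$ ($\mu$ the policy), discount $\gamma\in(0,1)$. Features $\Phi\in\mathbb{R}^{n\times K}$ of full column rank with rows $\phi(s)^T$, $\|\phi(s)\|_2\le1$, $V_\theta=\Phi\theta$. Norms: $\|V\|_D^2=\sum_s\pi_sV(s)^2$; $\|V\|_{\rm Dir}^2=\frac12\sum_{s,s'}\pi_sP(s,s')(V(s')-V(s))^2$. Mean TD(0) direction $\bar g(\theta)=\sum_{s,s'}\pi_sP(s,s')\big(r(s,s')+\gamma\phi(s')^T\theta-\phi(s)^T\theta\big)\phi(s)$; $\theta^*$ is the unique vector with $\bar g(\theta^* )=0$. *)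

(* Defs.v *)
From HB Require Import structures.
From mathcomp Require Import all_boot all_order all_algebra.
From mathcomp Require Import reals.
Set Implicit Arguments. Unset Strict Implicit. Unset Printing Implicit Defensive.
Import Order.TTheory GRing.Theory Num.Theory.
Local Open Scope ring_scope.

Section Defs.
Variable R : realType.

Definition induced_P (n : nat) (A : finType) (mu : 'I_n -> A -> R)
  (p : 'I_n -> A -> 'I_n -> R) : 'M[R]_n :=
  \matrix_(s, s') \sum_(a : A) mu s a * p s a s'.

Definition induced_r (n : nat) (A : finType) (mu : 'I_n -> A -> R)
  (r : 'I_n -> A -> 'I_n -> R) (s s' : 'I_n) : R :=
  \sum_(a : A) mu s a * r s a s'.

Definition stochastic_mx (n : nat) (P : 'M[R]_n) : Prop :=
  (forall s s', 0 <= P s s') /\ (forall s, \sum_s' P s s' = 1).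

Definition distribution (n : nat) (pi : 'rV[R]_n) : Prop :=
  (forall s, 0 <= pi 0 s) /\ \sum_s pi 0 s = 1.

Definition stationary (n : nat) (P : 'M[R]_n) (pi : 'rV[R]_n) : Prop :=
  distribution pi /\ pi *m P = pi.

Definition irreducible (n : nat) (P : 'M[R]_n) : Prop :=
  forall s s', exists k : nat, 0 < (P ^+ k) s s'.

Definition aperiodic (n : nat) (P : 'M[R]_n) : Prop :=
  forall s, forall d : nat,
    (forall k : nat, (0 < k)%N -> 0 < (P ^+ k) s s -> (d %| k)%N) -> d = 1%N.

Definition Vtheta (n K : nat) (Phi : 'M[R]_(n, K)) (theta : 'cV[R]_K) : 'cV[R]_n :=
  Phi *m theta.

Definition normD2 (n : nat) (pi : 'rV[R]_n) (V : 'cV[R]_n) : R :=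
  \sum_s pi 0 s * V s 0 ^+ 2.

Definition normDir2 (n : nat) (pi : 'rV[R]_n) (P : 'M[R]_n) (V : 'cV[R]_n) : R :=
  2^-1 * \sum_s \sum_s' pi 0 s * P s s' * (V s' 0 - V s 0) ^+ 2.

Definition gbar (n K : nat) (pi : 'rV[R]_n) (P : 'M[R]_n) (rr : 'I_n -> 'I_n -> R)
  (gamma : R) (Phi : 'M[R]_(n, K)) (theta : 'cV[R]_K) : 'cV[R]_K :=
  \col_k \sum_s \sum_s' pi 0 s * P s s' *
     (rr s s' + gamma * (Phi *m theta) s' 0 - (Phi *m theta) s 0) * Phi s k.

Definition dotK (K : nat) (u v : 'cV[R]_K) : R := \sum_k u k 0 * v k 0.

End Defs.

(* Main.v *)
Require Import Defs.
From HB Require Import structures.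
From mathcomp Require Import all_boot all_order all_algebra.
From mathcomp Require Import reals.
From mathcomp Require Import ring lra.
Import Order.TTheory GRing.Theory Num.Theory.
Local Open Scope ring_scope.

Lemma lin3 (R : realType) (n : nat) (f g h : 'I_n -> 'I_n -> R) (a b d : R) :
  \sum_s \sum_s' (a * f s s' + b * g s s' + d * h s s') =
  a * (\sum_s \sum_s' f s s') + b * (\sum_s \sum_s' g s s') + d * (\sum_s \sum_s' h s s').
Proof.
rewrite !mulr_sumr -!big_split; apply: eq_bigr => s _.
rewrite !mulr_sumr -!big_split; apply: eq_bigr => s' _ //.
Qed.

Theorem corollary1 (R : realType) (n K : nat) (A : finType)
  (mu : 'I_n -> A -> R) (p : 'I_n -> A -> 'I_n -> R)
  (r : 'I_n -> A -> 'I_n -> R) (gamma : R) (Phi : 'M[R]_(n, K))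
  (pi : 'rV[R]_n) (theta_star : 'cV[R]_K) :
  (* policy: a probability distribution over actions in each state *)
  (forall s a, 0 <= mu s a) -> (forall s, \sum_a mu s a = 1) ->
  (* MDP transition kernel *)
  (forall s a s', 0 <= p s a s') -> (forall s a, \sum_s' p s a s' = 1) ->
  (* induced chain irreducible and aperiodic *)
  irreducible (induced_P mu p) -> aperiodic (induced_P mu p) ->
  (* pi: the unique stationary distribution *)
  stationary (induced_P mu p) pi ->
  (forall pi', stationary (induced_P mu p) pi' -> pi' = pi) ->
  (* bounded rewards *)
  (exists B : R, forall s a s', `|r s a s'| <= B) ->
  0 < gamma < 1 ->
  (* features: full column rank, rows of norm <= 1 *)
  \rank Phi = K ->
  (forall s, \sum_k Phi s k ^+ 2 <= 1) ->
  (* theta_star: the unique zero of gbar *)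
  gbar pi (induced_P mu p) (induced_r mu r) gamma Phi theta_star = 0 ->
  (forall th, gbar pi (induced_P mu p) (induced_r mu r) gamma Phi th = 0 ->
     th = theta_star) ->
  forall theta : 'cV[R]_K,
    dotK (theta_star - theta) (gbar pi (induced_P mu p) (induced_r mu r) gamma Phi theta)
    = (1 - gamma) * normD2 pi (Vtheta Phi theta_star - Vtheta Phi theta)
      + gamma * normDir2 pi (induced_P mu p) (Vtheta Phi theta_star - Vtheta Phi theta).
Proof.
move=> _ Hmu _ Hp _ _ [_ Hst] _ _ _ _ _ Hg _ theta.
set P := induced_P mu p.
have Hrow : forall s, \sum_s' P s s' = 1.
  move=> s; under eq_bigr => s' _ do rewrite /P mxE.
  rewrite exchange_big /= -(Hmu s); apply: eq_bigr => a _.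
  by rewrite -mulr_sumr Hp mulr1.
have Hcol : forall s', \sum_s pi 0 s * P s s' = pi 0 s'.
  by move=> sx; have := congr1 (fun M : 'rV[R]_n => M 0 sx) Hst; rewrite /= mxE.
set e := fun s => (Vtheta Phi theta_star - Vtheta Phi theta) s 0.
have He : forall s, e s = \sum_k Phi s k * (theta_star - theta) k 0.
  by move=> s; rewrite /e /Vtheta -mulmxBr mxE.
have He2 : forall s, e s = (Phi *m theta_star) s 0 - (Phi *m theta) s 0.
  by move=> s; rewrite /e /Vtheta !mxE.
set c := fun s s' => pi 0 s * P s s'.
have X1 : normD2 pi (Vtheta Phi theta_star - Vtheta Phi theta)
          = \sum_s \sum_s' c s s' * e s ^+ 2.
  rewrite /normD2; apply: eq_bigr => s _.
  by rewrite -mulr_suml /c -mulr_sumr Hrow mulr1.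
have X2 : normD2 pi (Vtheta Phi theta_star - Vtheta Phi theta)
          = \sum_s \sum_s' c s s' * e s' ^+ 2.
  rewrite /normD2 exchange_big /=; apply: eq_bigr => s' _.
  by rewrite -mulr_suml /c Hcol.
have Y : normDir2 pi P (Vtheta Phi theta_star - Vtheta Phi theta)
         = 2^-1 * \sum_s \sum_s' c s s' * (e s' - e s) ^+ 2 by [].
have L : dotK (theta_star - theta) (gbar pi P (induced_r mu r) gamma Phi theta)
         = \sum_s \sum_s' c s s' * ((e s - gamma * e s') * e s).
  have Z : \sum_k (theta_star - theta) k 0 *
             gbar pi P (induced_r mu r) gamma Phi theta_star k 0 = 0.
    by apply: big1 => k _; rewrite Hg !mxE /= mulr0.
  rewrite /dotK -[X in X = _]subr0.
  rewrite -[X in _ - X = _]Z -sumrB.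
  transitivity (\sum_k \sum_s \sum_s' (theta_star - theta) k 0 *
                 (c s s' * (e s - gamma * e s') * Phi s k)).
    apply eq_bigr => k _; rewrite -mulrBr /gbar [X in _ * (X - _)]mxE [X in _ * (_ - X)]mxE -sumrB mulr_sumr.
    apply eq_bigr => s _; rewrite -sumrB mulr_sumr; apply eq_bigr => s' _.
    rewrite !He2 /c; ring.
  rewrite exchange_big /=; apply eq_bigr => s _.
  rewrite exchange_big /=; apply eq_bigr => s' _.
  set t := (e s - gamma * e s'); rewrite (He s) !mulr_sumr; apply eq_bigr => k _; ring.
rewrite L Y.
have -> : \sum_s \sum_s' c s s' * ((e s - gamma * e s') * e s) =
  (1 - gamma / 2) * (\sum_s \sum_s' c s s' * e s ^+ 2)
  + (- (gamma / 2)) * (\sum_s \sum_s' c s s' * e s' ^+ 2)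
  + (gamma / 2) * (\sum_s \sum_s' c s s' * (e s' - e s) ^+ 2).
  rewrite -(@lin3 R n (fun s s' => c s s' * e s ^+ 2) (fun s s' => c s s' * e s' ^+ 2)
    (fun s s' => c s s' * (e s' - e s) ^+ 2)).
  apply eq_bigr => s _; apply eq_bigr => s' _ /=; by field.
rewrite -X1 -X2; by field.
Qed.
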